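(* Let $f:\mathbb R^{d_x}\times\mathbb R^{d_y}\to\mathbb R$ be $L$-smooth, with $-f(x,\cdot)$ $\mu_y$-PL for every $x$, such that for every $x$ the problem $\max_yf(x,y)$ has a unique solution and finite optimal value, and $g(x)=\max_yf(x,y)$ is bounded below. Let $\beta>L$, $u\in\mathbb R^{d_x}$ and $F(x,y)=f(x,y)+\frac\beta2\|x-u\|^2$. Then $F$ has a unique saddle point, i.e. a unique $(\tilde x,\tilde y)$ with $F(\tilde x,y)\le F(\tilde x,\tilde y)\le F(x,\tilde y)$ for all $x,y$.
   Context: $L$-smooth means $\|\nabla f(x,y)-\nabla f(x',y')\|^2\le L^2(\|x-x'\|^2+\|y-y'\|^2)$. A differentiable $h$ is $\mu$-PL if $\|\nabla h(z)\|^2\ge2\mu(h(z)-\min h)$ for all $z$. *)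

(* Defs.v *)
From HB Require Import structures.
From mathcomp Require Import all_boot all_order all_algebra.
From mathcomp Require Import all_classical all_reals all_analysis.
Set Implicit Arguments. Unset Strict Implicit. Unset Printing Implicit Defensive.
Import Order.TTheory GRing.Theory Num.Theory.
Import numFieldNormedType.Exports.
Local Open Scope classical_set_scope.
Local Open Scope ring_scope.

Definition sqn {R : realType} {n : nat} (v : 'rV[R]_n) : R :=
  \sum_(i < n) (v ord0 i) ^+ 2.

Definition grad {R : realType} {n : nat} (h : 'rV[R]_n -> R) (z : 'rV[R]_n)
  : 'rV[R]_n := \row_i ('d h z (delta_mx ord0 i)).

Definition gradx {R : realType} {dx dy : nat} (f : 'rV[R]_dx * 'rV[R]_dy -> R)
  (x : 'rV[R]_dx) (y : 'rV[R]_dy) : 'rV[R]_dx :=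
  \row_i ('d f (x, y) (delta_mx ord0 i, 0)).
Definition grady {R : realType} {dx dy : nat} (f : 'rV[R]_dx * 'rV[R]_dy -> R)
  (x : 'rV[R]_dx) (y : 'rV[R]_dy) : 'rV[R]_dy :=
  \row_i ('d f (x, y) (0, delta_mx ord0 i)).

Definition L_smooth {R : realType} {dx dy : nat} (f : 'rV[R]_dx * 'rV[R]_dy -> R)
  (L : R) : Prop :=
  (forall z, differentiable f z) /\
  forall x y x' y',
    sqn (gradx f x y - gradx f x' y') + sqn (grady f x y - grady f x' y')
      <= L ^+ 2 * (sqn (x - x') + sqn (y - y')).

Definition PL {R : realType} {n : nat} (h : 'rV[R]_n -> R) (mu : R) : Prop :=
  (forall z, differentiable h z) /\
  forall z, 2 * mu * (h z - inf (range h)) <= sqn (grad h z).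

Definition maxval {R : realType} {dx dy : nat} (f : 'rV[R]_dx * 'rV[R]_dy -> R)
  (x : 'rV[R]_dx) : R := sup (range (fun y => f (x, y))).

Definition saddle_point {R : realType} {dx dy : nat}
  (F : 'rV[R]_dx * 'rV[R]_dy -> R) (p : 'rV[R]_dx * 'rV[R]_dy) : Prop :=
  forall x y, F (p.1, y) <= F p /\ F p <= F (x, p.2).

(* Main.v *)
Require Import Defs.
From HB Require Import structures.
From mathcomp Require Import all_boot all_order all_algebra.
From mathcomp Require Import all_classical all_reals all_analysis.
From mathcomp Require Import ring lra.
Import Order.TTheory GRing.Theory Num.Theory.
Import numFieldNormedType.Exports.
Local Open Scope classical_set_scope.
Local Open Scope ring_scope.

Section S.
Context {R : realType} {V : normedModType R}.
Lemma line_derive (g : V -> R) (p w : V) (t : R) :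
  differentiable g (p + t *: w) ->
  is_derive t 1 (fun s : R => g (p + s *: w)) ('d g (p + t *: w) w).
Proof.
move=> dg.
have E : (fun h : R => h^-1 *: (((fun s : R => g (p + s *: w)) \o shift t) (h *: 1) - g (p + t *: w)))
  = (fun h : R => h^-1 *: ((g \o shift (p + t *: w)) (h *: w) - g (p + t *: w))).
  apply/funext => h /=; congr (_ *: (g _ - _)).
  rewrite /shift /=. idtac.
  by rewrite -[h%:A]/(h * 1) mulr1 scalerDl addrCA addrA.
split.
  by rewrite /derivable E; exact: diff_derivable.
by rewrite /derive E -/(derive g (p + t *: w) w) deriveE.
Qed.
End S.
Definition dot {R : realType} {n : nat} (a b : 'rV[R]_n) : R :=
  \sum_(i < n) a ord0 i * b ord0 i.

Lemma d_pair {R : realType} {dx dy : nat} (f : 'rV[R]_dx * 'rV[R]_dy -> R)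
  (x : 'rV[R]_dx) (y : 'rV[R]_dy) (v1 : 'rV[R]_dx) (v2 : 'rV[R]_dy) :
  'd f (x, y) (v1, v2) = dot (gradx f x y) v1 + dot (grady f x y) v2.
Proof.
have -> : (v1, v2) = (v1, 0) + (0, v2).
  by rewrite /GRing.add /= /add_pair /= addr0 add0r.
rewrite linearD; congr (_ + _).
- have -> : (v1, 0 : 'rV[R]_dy) = \sum_(i < dx) (v1 ord0 i *: (delta_mx ord0 i, 0)).
    rewrite {1}(row_sum_delta v1).
    elim/big_rec2: _ => [//|i a b _ <-].
    by rewrite /GRing.add /= /add_pair /= scaler0 addr0.
  rewrite linear_sum /dot; apply: eq_bigr => i _.
  by rewrite linearZ /= mxE mulrC.
- have -> : (0 : 'rV[R]_dx, v2) = \sum_(i < dy) (v2 ord0 i *: (0, delta_mx ord0 i)).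
    rewrite {1}(row_sum_delta v2).
    elim/big_rec2: _ => [//|i a b _ <-].
    by rewrite /GRing.add /= /add_pair /= scaler0 addr0.
  rewrite linear_sum /dot; apply: eq_bigr => i _.
  by rewrite linearZ /= mxE mulrC.
Qed.
Lemma hq {R : realType} (D0 K t : R) :
  is_derive t 1 (fun s : R => s * D0 + K / 2 * s ^+ 2) (D0 + K * t).
Proof.
have -> : (fun s : R => s * D0 + K / 2 * s ^+ 2) = (fun s => s * D0) + (K/2) \*: (fun s => s ^+ 2).
  by apply/funext => s.
apply: is_derive_eq.
rewrite scaler0 add0r !(@mulr1 _ : forall x : R, x%:A = x) /GRing.scale /=; by field.
Qed.

Lemma mvt_up {R : realType} (phi D : R -> R) (K : R) :
  (forall t : R, is_derive t (1:R) phi (D t)) ->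
  (forall t, 0 < t < 1 -> D t - D 0 <= K * t) ->
  phi 1 - phi 0 <= D 0 + K / 2.
Proof.
move=> dphi hD.
set psi := fun s => phi s - (s * D 0 + K / 2 * s ^+ 2).
have dpsi : forall t : R, is_derive t (1:R) psi (D t - (D 0 + K * t)).
  move=> t; rewrite /psi.
  have -> : (fun s => phi s - (s * D 0 + K / 2 * s ^+ 2)) =
     phi - (fun s : R => s * D 0 + K / 2 * s ^+ 2) by apply/funext.
  exact: (is_deriveB (dphi t) (hq (D 0) K t)).
have [c /[1!in_itv] /= /andP[c0 c1] Hc] := @MVT _ psi _ 0 1 ltr01 (fun t _ => dpsi t)
  (derivable_within_continuous (fun t _ => @ex_derive _ _ _ _ _ _ _ (dpsi t))).
have : psi 1 - psi 0 <= 0.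
  rewrite Hc subr0 mulr1; have := hD c; rewrite c0 c1 => /(_ isT); lra.
rewrite /psi; lra.
Qed.

Lemma mvt_lo {R : realType} (phi D : R -> R) (K : R) :
  (forall t : R, is_derive t (1:R) phi (D t)) ->
  (forall t, 0 < t < 1 -> - (K * t) <= D t - D 0) ->
  D 0 - K / 2 <= phi 1 - phi 0.
Proof.
move=> dphi hD.
have := @mvt_up R (fun s => - phi s) (fun s => - D s) K.
have dN : forall t : R, is_derive t (1:R) (fun s => - phi s) (- D t).
  by move=> t; apply: is_deriveN.
move=> /(_ dN) H.
have : - phi 1 - - phi 0 <= - D 0 + K / 2.
  by apply: H => t /hD; lra.
lra.
Qed.

Lemma sqn_ge0 {R : realType} {n} (v : 'rV[R]_n) : 0 <= sqn v.
Proof. by apply: sumr_ge0 => i _; apply: sqr_ge0. Qed.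

Lemma sqnDZ {R : realType} {n} (a b : 'rV[R]_n) (c : R) :
  sqn (a + c *: b) = sqn a + 2 * c * dot a b + c ^+ 2 * sqn b.
Proof.
rewrite /sqn /dot !mulr_sumr -!big_split; apply: eq_bigr => i _ /=.
rewrite !mxE; ring.
Qed.

Lemma sqnZ {R : realType} {n} (b : 'rV[R]_n) (c : R) :
  sqn (c *: b) = c ^+ 2 * sqn b.
Proof. by rewrite /sqn mulr_sumr; apply: eq_bigr => i _; rewrite mxE exprMn. Qed.

Lemma dotBl {R : realType} {n} (a b c : 'rV[R]_n) :
  dot (a - b) c = dot a c - dot b c.
Proof. by rewrite /dot -sumrB; apply: eq_bigr => i _; rewrite !mxE mulrBl. Qed.

Lemma sqnB_sym {R : realType} {n} (a b : 'rV[R]_n) : sqn (a - b) = sqn (b - a).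
Proof. by rewrite -opprB /sqn; apply: eq_bigr => i _; rewrite mxE sqrrN. Qed.

Lemma cs2 {R : realType} {n m} (a1 b1 : 'rV[R]_n) (a2 b2 : 'rV[R]_m) (c : R) :
  0 < c -> sqn a1 + sqn a2 <= c ^+ 2 * (sqn b1 + sqn b2) ->
  - (c * (sqn b1 + sqn b2)) <= dot a1 b1 + dot a2 b2 <= c * (sqn b1 + sqn b2).
Proof.
move=> c0 H.
have h1 := sqn_ge0 (a1 + c *: b1); have h2 := sqn_ge0 (a2 + c *: b2).
have h3 := sqn_ge0 (a1 + (- c) *: b1); have h4 := sqn_ge0 (a2 + (- c) *: b2).
rewrite !sqnDZ in h1 h2 h3 h4.
have e1 : 0 <= 2 * c * (c * (sqn b1 + sqn b2) + (dot a1 b1 + dot a2 b2)).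
  have -> : 2 * c * (c * (sqn b1 + sqn b2) + (dot a1 b1 + dot a2 b2)) =
    (c ^+ 2 * (sqn b1 + sqn b2) - (sqn a1 + sqn a2)) +
    ((sqn a1 + 2 * c * dot a1 b1 + c ^+ 2 * sqn b1) + (sqn a2 + 2 * c * dot a2 b2 + c ^+ 2 * sqn b2)) by ring.
  lra.
have e2 : 0 <= 2 * c * (c * (sqn b1 + sqn b2) - (dot a1 b1 + dot a2 b2)).
  have -> : 2 * c * (c * (sqn b1 + sqn b2) - (dot a1 b1 + dot a2 b2)) =
    (c ^+ 2 * (sqn b1 + sqn b2) - (sqn a1 + sqn a2)) +
    ((sqn a1 + 2 * - c * dot a1 b1 + (- c) ^+ 2 * sqn b1) + (sqn a2 + 2 * - c * dot a2 b2 + (- c) ^+ 2 * sqn b2)) by ring.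
  lra.
have c2 : 0 < 2 * c by lra.
rewrite (pmulr_rge0 _ c2) in e1; rewrite (pmulr_rge0 _ c2) in e2.
apply/andP; split; lra.
Qed.
Lemma aux5 {R : realType} (X D0 L S : R) :
  D0 - L * S / 2 <= X -> X <= D0 + L * S / 2 -> D0 - L / 2 * S <= X <= D0 + L / 2 * S.
Proof. move=> h1 h2; apply/andP; split; lra. Qed.

Lemma aux4 {R : realType} (a b c d k : R) :
  - k <= a - c + (b - d) <= k -> - k <= a + b - (c + d) <= k.
Proof. move=> /andP[h1 h2]; apply/andP; split; lra. Qed.

Lemma taylor {R : realType} {dx dy : nat} (f : 'rV[R]_dx * 'rV[R]_dy -> R) (L : R)
  (x v1 : 'rV[R]_dx) (y v2 : 'rV[R]_dy) :
  0 < L -> L_smooth f L ->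
  dot (gradx f x y) v1 + dot (grady f x y) v2 - L / 2 * (sqn v1 + sqn v2)
    <= f (x + v1, y + v2) - f (x, y) <=
  dot (gradx f x y) v1 + dot (grady f x y) v2 + L / 2 * (sqn v1 + sqn v2).
Proof.
move=> L0 [df Lip].
set D0 := dot (gradx f x y) v1 + dot (grady f x y) v2.
set S := sqn v1 + sqn v2.
pose phi := fun s : R => f ((x, y) + s *: (v1, v2)).
pose D := fun s : R => dot (gradx f (x + s *: v1) (y + s *: v2)) v1 +
                      dot (grady f (x + s *: v1) (y + s *: v2)) v2.
have dphi : forall t : R, is_derive t (1:R) phi (D t).
  move=> t; have := @line_derive _ _ f (x, y) (v1, v2) t (df _).
  have E : (x, y) + t *: (v1, v2) = (x + t *: v1, y + t *: v2) by [].
  by rewrite E d_pair.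
have D0E : D 0 = D0 by rewrite /D !scale0r !addr0.
have p1 : phi 1 = f (x + v1, y + v2) by rewrite /phi scale1r.
have p0 : phi 0 = f (x, y) by rewrite /phi scale0r addr0.
have hb : forall t, 0 < t < 1 -> - ((L * S) * t) <= D t - D 0 <= (L * S) * t.
  move=> t /andP[t0 _].
  have := Lip (x + t *: v1) (y + t *: v2) x y.
  rewrite [x + _ - x]addrC [y + _ - y]addrC !addKr !sqnZ.
  have -> : L ^+ 2 * (t ^+ 2 * sqn v1 + t ^+ 2 * sqn v2) = (L * t) ^+ 2 * (sqn v1 + sqn v2) by ring.
  move=> /(@cs2 _ _ _ _ v1 _ v2 _ (mulr_gt0 L0 t0)).
  rewrite /D /S !scale0r !addr0 [L * _ * t]mulrAC.
  have E1 := dotBl (gradx f (x + t *: v1) (y + t *: v2)) (gradx f x y) v1.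
  have E2 := dotBl (grady f (x + t *: v1) (y + t *: v2)) (grady f x y) v2.
  rewrite E1 E2.
  exact: aux4.
have u := @mvt_up _ phi D (L * S) dphi (fun t ht => proj2 (andP (hb t ht))).
have l := @mvt_lo _ phi D (L * S) dphi (fun t ht => proj1 (andP (hb t ht))).
rewrite D0E p1 p0 in u l.
exact: aux5.
Qed.
Lemma dir_y {R : realType} {dx dy : nat} (g : 'rV[R]_dx * 'rV[R]_dy -> R) x y e :
  (fun h : R => h^-1 *: (((fun y => g (x, y)) \o shift y) (h *: e) - g (x, y))) =
  (fun h : R => h^-1 *: ((g \o shift (x, y)) (h *: ((0 : 'rV[R]_dx), e)) - g (x, y))).
Proof.
apply/funext => h /=; congr (_ *: (g _ - _)).
by rewrite /shift /=; congr pair; rewrite /GRing.scale /= scaler0 add0r.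
Qed.

Lemma grad_negy {R : realType} {dx dy : nat} (f : 'rV[R]_dx * 'rV[R]_dy -> R) x y :
  (forall z, differentiable f z) ->
  differentiable (fun y => - f (x, y)) y ->
  sqn (grad (fun y => - f (x, y)) y) = sqn (grady f x y).
Proof.
move=> df dh; rewrite /sqn; apply: eq_bigr => i _; rewrite !mxE.
rewrite -deriveE //.
have -> : (fun y => - f (x, y)) = - (fun y => f (x, y)) by [].
have der : derivable (fun y => f (x, y)) y (delta_mx ord0 i).
  by rewrite /derivable dir_y; exact: diff_derivable.
rewrite deriveN // /derive dir_y -/(derive f (x, y) (0, delta_mx ord0 i)) deriveE //.
by rewrite sqrrN.
Qed.
Lemma sqn_cont {R : realType} {n} (a : 'rV[R]_n) : continuous (fun x : 'rV[R]_n => sqn (x - a)).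
Proof.
move=> x; rewrite /sqn.
have -> : (fun x0 : 'rV[R]_n => \sum_(i < n) (x0 - a) ord0 i ^+ 2) =
          \sum_(i < n) (fun x0 : 'rV[R]_n => (x0 - a) ord0 i ^+ 2).
  by apply/funext => z; rewrite fct_sumE.
apply: (big_ind (fun h : 'rV[R]_n -> R => {for x, continuous h})).
- first [ exact: cst_continuous | exact: (@cst_continuous _ _ (0:R) x) | (rewrite /continuous_at; exact: cvg_cst) | (apply: cvg_near_cst; exact: nearW) ].
- by move=> g h; exact: continuousD.
move=> i _.
have -> : (fun x0 : 'rV[R]_n => (x0 - a) ord0 i ^+ 2) =
   (fun x0 => (x0 ord0 i - a ord0 i)) \* (fun x0 => (x0 ord0 i - a ord0 i)).
  by apply/funext => z; rewrite !mxE expr2.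
apply: continuousM; apply: continuousB; [exact: coord_continuous | exact: cst_continuous|exact: coord_continuous | exact: cst_continuous].
Qed.

Lemma fx_cont {R : realType} {dx dy : nat} (f : 'rV[R]_dx * 'rV[R]_dy -> R) (y0 : 'rV[R]_dy) :
  (forall z, differentiable f z) -> continuous (fun x => f (x, y0)).
Proof.
move=> df x.
have h1 : differentiable (fun z : 'rV[R]_dx => (z, y0)) x.
  apply: differentiable_pair; last exact: differentiable_cst.
  exact: ex_diff.
have h2 := differentiable_comp h1 (df _).
exact: (differentiable_continuous h2).
Qed.
Lemma sqn0 {R : realType} {n} : sqn (0 : 'rV[R]_n) = 0.
Proof. by rewrite /sqn big1 // => i _; rewrite mxE expr0n. Qed.

Lemma dot0r {R : realType} {n} (a : 'rV[R]_n) : dot a 0 = 0.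
Proof. by rewrite /dot big1 // => i _; rewrite mxE mulr0. Qed.

Lemma dot0l {R : realType} {n} (a : 'rV[R]_n) : dot 0 a = 0.
Proof. by rewrite /dot big1 // => i _; rewrite mxE mul0r. Qed.

Lemma dotZr {R : realType} {n} (a b : 'rV[R]_n) c : dot a (c *: b) = c * dot a b.
Proof. by rewrite /dot mulr_sumr; apply: eq_bigr => i _; rewrite mxE mulrCA. Qed.

Lemma dotZl {R : realType} {n} (a b : 'rV[R]_n) c : dot (c *: a) b = c * dot a b.
Proof. by rewrite /dot mulr_sumr; apply: eq_bigr => i _; rewrite mxE mulrA. Qed.

Lemma dotDl {R : realType} {n} (a b c : 'rV[R]_n) : dot (a + b) c = dot a c + dot b c.
Proof. by rewrite /dot -big_split; apply: eq_bigr => i _; rewrite mxE mulrDl. Qed.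

Lemma dot_self {R : realType} {n} (a : 'rV[R]_n) : dot a a = sqn a.
Proof. by rewrite /dot /sqn; apply: eq_bigr => i _; rewrite expr2. Qed.

Lemma coord_le_sqn {R : realType} {n} (v : 'rV[R]_n) i : v ord0 i ^+ 2 <= sqn v.
Proof.
rewrite /sqn (bigD1 i) //= lerDl; apply: sumr_ge0 => j _; exact: sqr_ge0.
Qed.

Lemma sqn_le0 {R : realType} {n} (v : 'rV[R]_n) : sqn v <= 0 -> v = 0.
Proof.
move=> h; apply/rowP => i; rewrite mxE.
have h1 := coord_le_sqn v i.
have : v ord0 i ^+ 2 <= 0 by apply: le_trans h.
by rewrite -[_ <= 0]negbK -ltNge exprn_even_gt0 //= negbK => /eqP.
Qed.

Lemma Fcont {R : realType} {dx dy : nat} (f : 'rV[R]_dx * 'rV[R]_dy -> R) (y0 : 'rV[R]_dy) (a : 'rV[R]_dx) (c : R) :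
  (forall z, differentiable f z) -> continuous (fun x => f (x, y0) + c * sqn (x - a)).
Proof.
move=> df x.
have -> : (fun x => f (x, y0) + c * sqn (x - a)) = (fun x => f (x, y0)) + ((fun _ => c) \* (fun x => sqn (x - a))) by [].
apply: continuousD; first exact: fx_cont.
apply: continuousM; [exact: cst_continuous | exact: sqn_cont].
Qed.

Lemma Fcont2 {R : realType} {dx dy : nat} (f : 'rV[R]_dx * 'rV[R]_dy -> R) (y0 : 'rV[R]_dy) (a b : 'rV[R]_dx) (c d : R) :
  (forall z, differentiable f z) -> continuous (fun x => f (x, y0) + c * sqn (x - a) + d * sqn (x - b)).
Proof.
move=> df x.
have -> : (fun x => f (x, y0) + c * sqn (x - a) + d * sqn (x - b)) = (fun x => f (x, y0) + c * sqn (x - a)) + ((fun _ => d) \* (fun x => sqn (x - b))) by [].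
apply: continuousD; first exact: Fcont.
apply: continuousM; [exact: cst_continuous | exact: sqn_cont].
Qed.
Lemma G_arith {R : realType} (A1 A2 A3 Q a b qG t beta C L : R) :
  0 < L / 2 + C + beta / 2 -> t = (2 * (L / 2 + C + beta / 2))^-1 ->
  A1 + beta / 2 * Q <= A2 + beta / 2 * (Q + 2 * - t * b + (- t) ^+ 2 * qG) ->
  A2 <= A3 + C * ((- t) ^+ 2 * qG) ->
  A3 - A1 <= - t * a + L / 2 * ((- t) ^+ 2 * qG) ->
  a + beta * b = qG -> qG <= 0.
Proof.
move=> K0 te h1 h2 h3 eG.
set K := L / 2 + C + beta / 2 in K0 te.
have t0 : 0 < t by rewrite te invr_gt0 mulr_gt0.
have tK : t * K = 1 / 2 by rewrite te; field; rewrite lt0r_neq0.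
have eGt : t * a + beta * t * b = t * qG by rewrite -eG; ring.
have key : 0 <= - (t * qG) + t * (t * K) * qG.
  have -> : t * (t * K) * qG = t ^+ 2 * qG * L / 2 + t ^+ 2 * qG * C + t ^+ 2 * qG * beta / 2 by rewrite /K; ring.
  have e3 : (- t) ^+ 2 = t ^+ 2 by rewrite sqrrN.
  rewrite e3 in h1 h2 h3.
  nra.
rewrite tK in key.
have : t * qG <= 0 by lra.
by rewrite pmulr_rle0.
Qed.
Lemma coer_arith {R : realType} (m d q s r : R) : 0 < m -> 0 <= q + 2 * (m / 2) * d + (m / 2) ^+ 2 * s ->
  m ^+ 2 * r < m ^+ 2 * s -> m ^+ 2 * r = m ^+ 2 + 4 * q -> 0 < m * (d + m / 2 * s).
Proof. move=> m0 h1 h2 h3. have hm2 : 0 < m ^+ 2 by rewrite exprn_gt0. nra. Qed.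
Theorem mainTheorem15 (R : realType) (dx dy : nat)
  (f : 'rV[R]_dx * 'rV[R]_dy -> R) (L mu_y beta : R) (u : 'rV[R]_dx) :
  0 < L -> 0 < mu_y ->
  L_smooth f L ->
  (forall x, PL (fun y => - f (x, y)) mu_y) ->
  (forall x, exists! ys, forall y, f (x, y) <= f (x, ys)) ->
  (exists c : R, forall x, c <= maxval f x) ->
  L < beta ->
  exists! p, saddle_point (fun z => f z + beta / 2 * sqn (z.1 - u)) p.
Proof.
move=> L0 mu0 Hs HPL Huniq _ Lb.
have [df Lip] := Hs.
have m0 : 0 < beta - L by rewrite subr_gt0.
have hex : forall x, exists ys, forall y, f (x, y) <= f (x, ys).
  by move=> x; have [ys [H _]] := Huniq x; exists ys.
have [ys Hys] := choice hex.
have Yuniq : forall x y', (forall y, f (x, y) <= f (x, y')) -> y' = ys x.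
  move=> x y' H; have [z [_ Hz]] := Huniq x.
  by rewrite -(Hz _ H) -(Hz _ (Hys x)).
have Tx : forall x v y, dot (gradx f x y) v - L / 2 * sqn v <= f (x + v, y) - f (x, y)
                        <= dot (gradx f x y) v + L / 2 * sqn v.
  by move=> x v y; have := taylor f L x v y 0 L0 Hs; rewrite sqn0 dot0r !addr0.
have gy0 : forall x, grady f x (ys x) = 0.
  move=> x; set g := grady f x (ys x).
  have := taylor f L x 0 (ys x) (L^-1 *: g) L0 Hs.
  rewrite sqn0 dot0r addr0 add0r dotZr dot_self sqnZ.
  move=> /andP[h _]; have h2 := Hys x (ys x + L^-1 *: g).
  apply: sqn_le0.
  have e : L / 2 * (L^-1 ^+ 2 * sqn g) = L^-1 / 2 * sqn g by field; rewrite lt0r_neq0.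
  have : L^-1 * sqn g <= 0 by lra.
  by rewrite pmulr_rle0 // invr_gt0.
have PLc : forall x y, 2 * mu_y * (f (x, ys x) - f (x, y)) <= sqn (grady f x y).
  move=> x y; have [dh Hpl] := HPL x; have := Hpl y.
  rewrite (grad_negy f x y df (dh y)).
  have hi : inf (range (fun y => - f (x, y))) <= - f (x, ys x).
    apply: ge_inf; last by exists (ys x).
    by exists (- f (x, ys x)) => _ [z _ <-]; rewrite lerN2; exact: Hys.
  move: (inf _) hi => I hi h.
  have h3 : 2 * mu_y * (f (x, ys x) - f (x, y)) <= 2 * mu_y * (- f (x, y) - I).
    by apply: ler_wpM2l; lra.
  lra.
have gyL : forall x x' y, sqn (grady f x' y - grady f x y) <= L ^+ 2 * sqn (x' - x).
  move=> x x' y; have := Lip x' y x y; rewrite (subrr y) sqn0 addr0.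
  have := sqn_ge0 (gradx f x' y - gradx f x y); lra.
pose C := L ^+ 2 / (2 * mu_y).
have C0 : 0 <= C by rewrite /C divr_ge0 // ?sqr_ge0 // ltW // mulr_gt0.
have Pup : forall x x0, f (x, ys x) <= f (x, ys x0) + C * sqn (x - x0).
  move=> x x0; have h1 := PLc x (ys x0); have h2 := gyL x0 x (ys x0).
  rewrite gy0 subr0 in h2.
  have e : 2 * mu_y * C = L ^+ 2 by rewrite /C; field; rewrite lt0r_neq0.
  have : 2 * mu_y * (f (x, ys x) - f (x, ys x0) - C * sqn (x - x0)) <= 0.
    rewrite mulrBr mulrA e; lra.
  rewrite pmulr_rle0; first lra.
  by rewrite mulr_gt0.
pose Psi := fun x => f (x, ys x) + beta / 2 * sqn (x - u).
have Pcont : continuous Psi.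
  move=> x0.
  apply: (@squeeze_cvgr _ (nbhs x0) _ _ (fun x => f (x, ys x0) + beta / 2 * sqn (x - u))
     (fun x => f (x, ys x0) + beta / 2 * sqn (x - u) + C * sqn (x - x0))).
  - apply: nearW => x; rewrite /Psi; apply/andP; split.
      by have := Hys x (ys x0); lra.
    by have := Pup x x0; lra.
  - exact: Fcont.
  - have := Fcont2 f (ys x0) u x0 (beta / 2) C df x0.
    have s0 : sqn (x0 - x0) = 0 by rewrite /sqn big1 // => i _; rewrite !mxE subrr expr0n.
    by rewrite /continuous_at s0 mulr0 addr0.
pose m := beta - L.
pose g0 := gradx f u (ys u).
pose q := sqn g0.
pose r := 1 + 4 * q * (m^-1) ^+ 2.
have q0 : 0 <= q by exact: sqn_ge0.
have r1 : 1 <= r by rewrite /r lerDl; apply: mulr_ge0; [apply: mulr_ge0 => //; lra| exact: sqr_ge0].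
pose A := [set v : 'rV[R]_dx | forall i, `[u ord0 i - r, u ord0 i + r]%classic (v ord0 i)].
have cA : compact A := @rV_compact R dx (fun i => `[u ord0 i - r, u ord0 i + r]%classic) (fun i => @segment_compact R (u ord0 i - r) (u ord0 i + r)).
have uA : A u by move=> i /=; rewrite in_itv /=; apply/andP; split; lra.
have [xt xtA Hxt] := EVT_min_rV (ex_intro _ u uA) cA (continuous_subspaceT Pcont).
have coer : forall x, ~ A x -> Psi u < Psi x.
  move=> x /existsNP [i hi].
  have hi' : r ^+ 2 < (x - u) ord0 i ^+ 2.
    rewrite mxE mxE.
    move: hi; rewrite /= in_itv /= => /negP; rewrite negb_and -!ltNge => /orP[h|h]; nra.
  have hc := coord_le_sqn (x - u) i.
  set s := sqn (x - u) in hc.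
  have hs : r < s by nra.
  have hT := Tx u (x - u) (ys u).
  have ex : u + (x - u) = x by rewrite addrC subrK.
  rewrite ex in hT.
  have hY := Hys x (ys u).
  have hD := sqn_ge0 (g0 + (m / 2) *: (x - u)).
  rewrite sqnDZ -/q -/s in hD.
  have hmr : m ^+ 2 * r = m ^+ 2 + 4 * q by rewrite /r; field; rewrite lt0r_neq0.
  have hms : m ^+ 2 * r < m ^+ 2 * s by rewrite ltr_pM2l // exprn_gt0.
  have hPu : Psi u = f (u, ys u).
    have s0 : sqn (u - u) = 0 by rewrite /sqn big1 // => j _; rewrite !mxE subrr expr0n.
    by rewrite /Psi s0 mulr0 addr0.
  rewrite hPu /Psi.
  move: (dot g0 (x - u)) hT hD => d hT hD.
  move: hT => /andP[hT _]; rewrite -/s in hT.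
  have : 0 < m * (f (x, ys x) + beta / 2 * s - f (u, ys u)).
    have e : m * (f (x, ys x) + beta / 2 * s - f (u, ys u)) >=
             m * (d + m / 2 * s).
      apply: ler_wpM2l; rewrite /m; lra.
    have hm2 : 0 < m ^+ 2 by rewrite exprn_gt0.
    apply: (lt_le_trans _ e); exact: (@coer_arith R m d q s r m0 hD hms hmr).
  rewrite pmulr_rgt0 // -/s; lra.
have gmin : forall x, Psi xt <= Psi x.
  move=> x; have [xA|xnA] := pselect (A x).
    exact: (Hxt x (mem_set xA)).
  exact: (le_trans (Hxt u (mem_set uA)) (ltW (coer x xnA))).
have SC : forall x v y, f (x, y) + beta / 2 * sqn (x - u) + dot (gradx f x y + beta *: (x - u)) v
    + m / 2 * sqn v <= f (x + v, y) + beta / 2 * sqn (x + v - u).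
  move=> x v y; have /andP[h _] := Tx x v y.
  have e : x + v - u = (x - u) + 1 *: v by rewrite scale1r addrAC.
  rewrite e sqnDZ (dotDl (gradx f x y)) dotZl expr1n mul1r /m; lra.
pose yt := ys xt.
pose G := gradx f xt yt + beta *: (xt - u).
have G0 : G = 0.
  apply: sqn_le0.
  pose t := (2 * (L / 2 + C + beta / 2))^-1.
  pose xs := xt + (- t) *: G.
  have h1 := gmin xs.
  have h2 := Pup xs xt.
  have h3 := Tx xt ((- t) *: G) yt.
  have e1 : xs - xt = (- t) *: G by rewrite /xs addrAC subrr add0r.
  have e2 : xs - u = (xt - u) + (- t) *: G by rewrite /xs addrAC.
  rewrite /Psi e2 sqnDZ in h1.
  rewrite e1 sqnZ in h2.
  move: h3 => /andP[_ h3]; rewrite dotZr sqnZ in h3.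
  have eG : dot (gradx f xt yt) G + beta * dot (xt - u) G = sqn G.
    by rewrite -dot_self [in RHS]/G (dotDl (gradx f xt yt)) dotZl.
  apply: (@G_arith R _ _ _ _ _ _ _ _ _ _ _ _ _ h1 h2 h3 eG) => //; lra.
pose F := fun z : 'rV[R]_dx * 'rV[R]_dy => f z + beta / 2 * sqn (z.1 - u).
have sadP : forall p1 p2, saddle_point F (p1, p2) -> p2 = ys p1 /\ forall x, Psi p1 <= Psi x.
  move=> p1 p2 Hp.
  have e2 : p2 = ys p1.
    by apply: Yuniq => y; have [h _] := Hp p1 y; move: h; rewrite /F /=; lra.
  split => // x; have [_ h] := Hp x p2; move: h; rewrite /F /=.
  by have := Hys x p2; rewrite /Psi -e2; lra.
have minU : forall a b, (forall x, Psi a <= Psi x) -> (forall x, Psi b <= Psi x) -> a = b.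
  move=> a b ha hb.
  pose v := 2^-1 *: (b - a). pose c := a + v. pose yc := ys c.
  have hh : (2^-1 + 2^-1 : R) = 1 by field.
  have cv : c + v = b by rewrite /c /v -addrA -scalerDl hh scale1r addrC subrK.
  have cmv : c + (-1) *: v = a by rewrite /c scaleN1r addrK.
  have s1 := SC c v yc. have s2 := SC c ((-1) *: v) yc.
  rewrite cv in s1; rewrite cmv dotZr sqnZ sqrrN expr1n mul1r in s2.
  have t1 := Hys b yc; have t2 := Hys a yc.
  have u1 := ha c; have u2 := hb c.
  rewrite /Psi in u1 u2.
  have : m * sqn v <= 0 by rewrite /yc in s1 s2 t1 t2; lra.
  rewrite pmulr_rle0 // => /sqn_le0 /eqP.
  rewrite /v scaler_eq0 invr_eq0 pnatr_eq0 /= subr_eq0 => /eqP.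
  by move=> ->.
exists (xt, yt); split.
- move=> x y /=; split.
  + by have := Hys xt y; rewrite -/yt; lra.
  + have := SC xt (x - xt) yt.
    rewrite -/G G0 dot0l.
    have ex : xt + (x - xt) = x by rewrite addrC subrK.
    rewrite ex; have := sqn_ge0 (x - xt); rewrite /m; nra.
- move=> [p1 p2] Hp.
  have [e2 hm] := sadP p1 p2 Hp.
  have e1 : p1 = xt := minU p1 xt hm gmin.
  by rewrite e2 e1.
Qed.
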